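(* Let $N$ be a finite nonempty set, $p\notin N$, $N'=N\cup\{p\}$, and let $\mathscr{B}$ be any minimal balanced collection on $N'$. Then $\mathscr{B}$ is obtained from minimal balanced collections on $N$ by one of the following four constructions: (1) there are a minimal balanced collection $\mathscr{C}=\{S_1,\dots,S_k\}$ on $N$ with balancing weights $\lambda$ and $I\subseteq[k]$ with $\lambda_I=1$ such that $\mathscr{B}=\{S_i\cup\{p\}\mid i\in I\}\cup\{S_i\mid i\notin I\}$; (2) there are such $\mathscr{C},\lambda$ and $I\subseteq[k]$ with $\lambda_I<1$ such that $\mathscr{B}=\{S_i\cup\{p\}\mid i\in I\}\cup\{S_i\mid i\notin I\}\cup\{\{p\}\}$; (3) there are such $\mathscr{C},\lambda$, $I\subseteq[k]$ and $\delta\in[k]\setminus I$ with $1>\lambda_I>1-\lambda_{S_\delta}$ such that $\mathscr{B}=\{S_i\cup\{p\}\mid i\in I\}\cup\{S_i\mid i\notin I\}\cup\{S_\delta\cup\{p\}\}$; (4) there are two distinct minimal balanced collections $\mathscr{C}^1,\mathscr{C}^2$ on $N$ whose union $\mathscr{C}=\{S_1,\dots,S_k\}$ has incidence matrix $A^{\mathscr{C}}$ of rank $k-1$, and $I\subseteq[k]$ with $\mu_I\neq\nu_I$ and $t^I=(1-\mu_I)/(\nu_I-\mu_I)\in\,]0,1[$, such that $\mathscr{B}=\{S_i\cup\{p\}\mid i\in I\}\cup\{S_i\mid i\notin I\}$ (here $\mu,\nu$ are the balancing weights of $\mathscr{C}^1,\mathscr{C}^2$ extended by $0$ to $\mathscr{C}$).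 Consequently, applying all four constructions to all minimal balanced collections on $N$ (and all pairs of them) yields exactly the set of minimal balanced collections on $N'$.
   Context: For $T\subseteq N$, $\mathbf{1}^T\in\mathbb{R}^N$ denotes the characteristic vector of $T$. A collection $\mathscr{B}$ of nonempty subsets of a finite set $N$ is balanced if there exist positive weights $(\lambda_S)_{S\in\mathscr{B}}$ (balancing weights) with $\sum_{S\in\mathscr{B}}\lambda_S\mathbf{1}^S=\mathbf{1}^N$. A balanced collection is minimal if it contains no balanced proper subcollection; equivalently, its system of balancing weights is unique. For a collection $\mathscr{C}=\{S_1,\dots,S_k\}$, $A^{\mathscr{C}}$ is the $|N|\times k$ matrix with columns $\mathbf{1}^{S_1},\dots,\mathbf{1}^{S_k}$; for weights $w$ and $I\subseteq[k]=\{1,\dots,k\}$, $w_I=\sum_{i\in I}w_{S_i}$. *)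

(* Defs.v *)
From HB Require Import structures.
From mathcomp Require Import all_boot all_order all_algebra.
Set Implicit Arguments. Unset Strict Implicit. Unset Printing Implicit Defensive.
Import Order.TTheory GRing.Theory Num.Theory.
Local Open Scope ring_scope.

Section Balanced.
Variables (R : realFieldType) (T : finType).

Definition collection_on (N : {set T}) (B : {set {set T}}) : Prop :=
  forall S, S \in B -> S != set0 /\ S \subset N.

Definition balancing (N : {set T}) (B : {set {set T}}) (w : {set T} -> R) : Prop :=
  (forall S, S \in B -> 0 < w S) /\
  (forall x, x \in N -> \sum_(S in B | x \in S) w S = 1).

Definition balanced (N : {set T}) (B : {set {set T}}) : Prop :=
  collection_on N B /\ exists w, balancing N B w.

Definition minimal_balanced (N : {set T}) (B : {set {set T}}) : Prop :=
  balanced N B /\ forall B' : {set {set T}}, B' \proper B -> ~ balanced N B'.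

Definition lift_coll (p : T) (I C : {set {set T}}) : {set {set T}} :=
  [set p |: S | S in I] :|: (C :\: I).

Definition incidence_mx (N : {set T}) (C : {set {set T}}) : 'M[R]_(#|N|, #|C|) :=
  \matrix_(i < #|N|, j < #|C|)
     ((@enum_val T (mem N) i \in @enum_val _ (mem C) j) : bool)%:R.

End Balanced.

(* Main.v *)
Require Import Defs.
From HB Require Import structures.
From mathcomp Require Import all_boot all_order all_algebra.
From mathcomp Require Import zify ring lra.
From Stdlib Require Import Classical.
Import Order.TTheory GRing.Theory Num.Theory.
Local Open Scope ring_scope.

Set Implicit Arguments. Unset Strict Implicit. Unset Printing Implicit Defensive.

Section Aux.
Variables (R : realFieldType) (T : finType).
Implicit Types (p : T) (N : {set T}) (B C I : {set {set T}}) (f g w c v d e : {set T} -> R).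

Definition kern N B c := forall x, x \in N -> \sum_(S in B | x \in S) c S = 0.
Definition indep N B := forall c, kern N B c -> forall S, S \in B -> c S = 0.

Lemma sum_ind B (A : {set T}) x (k : R) :
  \sum_(S in B | x \in S) ((S == A)%:R * k) = ((A \in B) && (x \in A))%:R * k.
Proof.
rewrite big_mkcond /= (bigD1 A) //= big1 ?addr0; last first.
  by move=> S /negbTE ->; rewrite mul0r if_same.
by rewrite eqxx mul1r; case: (_ && _); rewrite ?mul1r ?mul0r.
Qed.

Lemma sum_setU1 B (A : {set T}) x f : A \notin B ->
  \sum_(S in A |: B | x \in S) f S = (x \in A)%:R * f A + \sum_(S in B | x \in S) f S.
Proof.
move=> hA; rewrite big_mkcondr big_setU1 //= -big_mkcondr.
by case: (x \in A); rewrite ?mul1r ?mul0r.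
Qed.

Lemma sum_subset_pos B (A : {set {set T}}) v :
  (forall S, S \in B -> 0 <= v S) -> A \subset B ->
  \sum_(S in A :&: [set S in B | 0 < v S]) v S = \sum_(S in A) v S.
Proof.
move=> hv hAB; rewrite big_mkcond [RHS]big_mkcond; apply: eq_bigr => S _.
rewrite !inE; case hSA: (S \in A) => //=.
have hSB : S \in B by apply: (subsetP hAB).
rewrite hSB /=; case: ltP => //.
by move=> h; apply/esym/eqP; rewrite eq_le h hv.
Qed.

Lemma sum_support B v x :
  (forall S, S \in B -> 0 <= v S) ->
  \sum_(S in [set S in B | 0 < v S] | x \in S) v S = \sum_(S in B | x \in S) v S.
Proof.
move=> hv; rewrite big_mkcond [RHS]big_mkcond; apply: eq_bigr => S _.
rewrite !inE; case hSB: (S \in B) => //=; case: (x \in S); rewrite ?andbF ?andbT //=.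
case: ltP => // h; apply/esym/eqP; by rewrite eq_le h hv.
Qed.

Lemma shrink N B w c :
  balancing N B w -> kern N B c -> (exists2 S, S \in B & 0 < c S) ->
  exists a, [/\ 0 < a, forall S, S \in B -> 0 <= w S - a * c S &
    exists S0, [/\ S0 \in B, 0 < c S0 & w S0 - a * c S0 = 0]].
Proof.
move=> [wpos wsum] hc [S1 S1B cS1].
pose P := [pred S | (S \in B) && (0 < c S)].
have PS1 : P S1 by rewrite /P /= S1B cS1.
case: (arg_minP (fun S => w S / c S) PS1) => S0 /andP[S0B cS0] hmin.
exists (w S0 / c S0); split.
- by rewrite divr_gt0 // wpos.
- move=> S SB; case: (ltP 0 (c S)) => hcS.
    have := hmin S; rewrite /P /= SB hcS => /(_ isT) h.
    rewrite subr_ge0 -ler_pdivlMr //; exact: h.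
  rewrite subr_ge0; apply: (le_trans (y := 0)); last exact: ltW (wpos _ SB).
  by rewrite mulr_ge0_le0 // ltW // divr_gt0 // wpos.
- exists S0; split => //; rewrite divfK ?subrr //; exact: lt0r_neq0.
Qed.


Lemma sum_lin B x w c a :
  \sum_(S in B | x \in S) (w S - a * c S) =
  \sum_(S in B | x \in S) w S - a * \sum_(S in B | x \in S) c S.
Proof. by rewrite sumrB mulr_sumr. Qed.

Lemma sum_sub_ind B B' x w : B' \subset B ->
  \sum_(S in B | x \in S) ((S \in B')%:R * w S) = \sum_(S in B' | x \in S) w S.
Proof.
move=> hsub; rewrite big_mkcond [RHS]big_mkcond; apply: eq_bigr => S _.
case hS: (S \in B'); last by case: (_ && _); rewrite ?mul0r.
by rewrite (subsetP hsub _ hS) /= mul1r.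
Qed.

Lemma collection_sub N B B' : collection_on N B -> B' \subset B -> collection_on N B'.
Proof. by move=> h hs S hS; apply: h; apply: (subsetP hs). Qed.

Lemma balanced_support N B v :
  collection_on N B -> (forall S, S \in B -> 0 <= v S) ->
  (forall x, x \in N -> \sum_(S in B | x \in S) v S = 1) ->
  balanced R N [set S in B | 0 < v S].
Proof.
move=> hcol hv hs; split.
  by apply: (collection_sub hcol); apply/subsetP => S; rewrite inE => /andP[].
exists v; split; first by move=> S; rewrite inE => /andP[].
by move=> x hx; rewrite sum_support // hs.
Qed.

Lemma indep_minimal N B : balanced R N B -> indep N B -> minimal_balanced R N B.
Proof.
move=> hbal hind; split => // B' /properP[hsub [S0 S0B S0nB']] [_ [w' [w'pos w'sum]]].
case: hbal => hcol [w [wpos wsum]].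
pose c S := w S - 1 * ((S \in B')%:R * w' S).
have hc : kern N B c.
  by move=> x hx; rewrite /c sum_lin sum_sub_ind // wsum // w'sum // mul1r subrr.
have := hind c hc S0 S0B; rewrite /c (negbTE S0nB') mul0r mulr0 subr0 => h.
by have := wpos _ S0B; rewrite h ltxx.
Qed.

Lemma minimal_indep N B : minimal_balanced R N B -> indep N B.
Proof.
move=> [[hcol [w hw]] hmin] c0 hc0 S1 S1B; apply/eqP/negPn/negP => hne.
have [c [hc [S2 S2B cS2]]] : exists c, kern N B c /\ exists2 S, S \in B & 0 < c S.
  have [h|h|h] := ltrgtP 0 (c0 S1).
  - by exists c0; split => //; exists S1.
  - exists (fun S => - c0 S); split; last by exists S1; rewrite // oppr_gt0.
    by move=> x hx; rewrite sumrN hc0 // oppr0.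
  - by move: hne; rewrite -h eqxx.
have [a [apos hge [S0 [S0B cS0 hS0]]]] := shrink hw hc (ex_intro2 _ _ S2 S2B cS2).
apply: (hmin [set S in B | 0 < w S - a * c S]).
  apply/properP; split; first by apply/subsetP => S; rewrite inE => /andP[].
  by exists S0 => //; rewrite inE hS0 ltxx andbF.
apply: balanced_support => // x hx.
by rewrite sum_lin hc // mulr0 subr0; case: hw => _ ->.
Qed.

Lemma mb_iff N B : minimal_balanced R N B <-> balanced R N B /\ indep N B.
Proof.
split; first by move=> h; split; [case: h | exact: minimal_indep].
by case; apply: indep_minimal.
Qed.


Definition phi (p : T) (I : {set {set T}}) (S : {set T}) := if S \in I then p |: S else S.

Lemma setD1_notin (S : {set T}) p : p \notin S -> S :\ p = S.
Proof.
move=> h; apply/setP => y; rewrite !inE; case: eqP => // ->; by rewrite (negbTE h).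
Qed.

Lemma lift_eqE p I C : I \subset C -> lift_coll p I C = [set phi p I S | S in C].
Proof.
move=> hIC; rewrite -{2}(setID C I) (setIidPr hIC) imsetU /lift_coll; congr (_ :|: _).
  by apply: eq_in_imset => S hS; rewrite /phi hS.
rewrite -[LHS]imset_id; apply: eq_in_imset => S; rewrite inE => /andP[hS _].
by rewrite /phi (negbTE hS).
Qed.

Lemma notin_C N p C S : collection_on N C -> p \notin N -> S \in C -> p \notin S.
Proof.
move=> hcol hp hS; apply/negP => hpS; case: (hcol S hS) => _ hsub.
by move: hp; rewrite (subsetP hsub _ hpS).
Qed.

Lemma phiK N p I C S : collection_on N C -> p \notin N -> S \in C -> phi p I S :\ p = S.
Proof.
move=> hcol hp hS; have hpS := notin_C hcol hp hS.
by rewrite /phi; case: (S \in I); [rewrite setU1K | rewrite setD1_notin].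
Qed.

Lemma lift_sum N p I C x g : collection_on N C -> p \notin N -> I \subset C ->
  \sum_(S' in lift_coll p I C | x \in S') g S' =
  \sum_(S in C | x \in phi p I S) g (phi p I S).
Proof.
move=> hcol hp hIC; rewrite lift_eqE // big_mkcondr big_imset -?big_mkcondr //.
by move=> S1 S2 h1 h2 e; rewrite -(phiK I hcol hp h1) e (phiK I hcol hp h2).
Qed.

Lemma sum_in_sub (I C : {set {set T}}) (F : {set T} -> R) : I \subset C ->
  \sum_(S in C | S \in I) F S = \sum_(S in I) F S.
Proof.
move=> h; rewrite big_mkcond [RHS]big_mkcond; apply: eq_bigr => S _.
by case hS: (S \in I); rewrite ?andbF ?andbT // (subsetP h _ hS).
Qed.

Lemma lift_rowN N p I C x g : collection_on N C -> p \notin N -> I \subset C ->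
  x \in N ->
  \sum_(S' in lift_coll p I C | x \in S') g S' = \sum_(S in C | x \in S) g (phi p I S).
Proof.
move=> hcol hp hIC hx; rewrite (lift_sum _ _ hcol hp hIC); apply: eq_bigl => S.
have hxp : x != p by apply: contraNneq hp => <-.
by rewrite /phi; case: (S \in I); rewrite ?inE ?(negbTE hxp).
Qed.

Lemma lift_rowp N p I C g : collection_on N C -> p \notin N -> I \subset C ->
  \sum_(S' in lift_coll p I C | p \in S') g S' = \sum_(S in I) g (phi p I S).
Proof.
move=> hcol hp hIC; rewrite (lift_sum _ _ hcol hp hIC) -(sum_in_sub _ hIC).
apply: eq_bigl => S; case hS: (S \in C) => //=.
rewrite /phi; case: (S \in I); rewrite ?inE ?eqxx //.
by rewrite (negbTE (notin_C hcol hp hS)).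
Qed.

Lemma lift_mem N p I C S : I \subset C -> S \in C -> phi p I S \in lift_coll p I C.
Proof. by move=> hIC hS; rewrite lift_eqE // imset_f. Qed.

Lemma lift_collection N p I C : collection_on N C -> I \subset C ->
  collection_on (p |: N) (lift_coll p I C).
Proof.
move=> hcol hIC S'; rewrite lift_eqE // => /imsetP[S hS ->].
case: (hcol S hS) => hne hsub; split.
  apply: contraNneq hne => h; apply/eqP/setP => y; rewrite inE.
  apply/negbTE/negP => hy; have : y \in phi p I S.
    by rewrite /phi; case: (S \in I); rewrite ?inE ?hy ?orbT.
  by rewrite h inE.
rewrite /phi; case: (S \in I); first by rewrite setUS.
by apply: (subset_trans hsub); apply: subsetUr.
Qed.

Lemma decomp N p B' : p \notin N -> collection_on (p |: N) B' ->
  (forall S, S \in B' -> p \notin S -> p |: S \notin B') -> [set p] \notin B' ->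
  [/\ collection_on N [set S :\ p | S in B'],
      [set S :\ p | S in B' & p \in S] \subset [set S :\ p | S in B'] &
      B' = lift_coll p [set S :\ p | S in B' & p \in S] [set S :\ p | S in B']].
Proof.
move=> hp hcol hpair hsp.
set C := [set S :\ p | S in B']; set I := [set S :\ p | S in B' & p \in S].
have hIC : I \subset C.
  by apply: imsetS; apply/subsetP => S; rewrite inE => /andP[].
have hcolC : collection_on N C.
  move=> S' /imsetP[S hS ->]; case: (hcol S hS) => hne hsub; split.
    apply: contraNneq hsp => h.
    have hsub1 : S \subset [set p].
      apply/subsetP => y hy; rewrite inE; apply/negPn/negP => hyp.
      have : y \in S :\ p by rewrite !inE hyp hy.
      by rewrite h inE.
    case/set0Pn: hne => y hy; have := subsetP hsub1 _ hy; rewrite inE => /eqP hyp.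
    subst y; have <- : S = [set p] by apply/eqP; rewrite eqEsubset hsub1 sub1set hy.
    done.
  apply/subsetP => y; rewrite inE => /andP[hyp hy].
  by move: (subsetP hsub _ hy); rewrite inE (negbTE hyp).
split => //; rewrite lift_eqE // -imset_comp -[LHS]imset_id.
apply: eq_in_imset => S hS /=; rewrite /phi.
case hpS: (p \in S).
  have -> : S :\ p \in I by apply/imsetP; exists S; rewrite ?inE ?hS ?hpS.
  by rewrite setD1K.
rewrite setD1_notin ?hpS //; case: ifP => // /imsetP[S2]; rewrite inE.
move=> /andP[hS2 hpS2] e; have : p |: S \in B'.
  by rewrite e setD1K.
by rewrite (negbTE (hpair _ hS (negbT hpS))).
Qed.


Definition vec C c : 'rV[R]_#|C| := \row_j c (enum_val j).
Definition fv C (u : 'rV[R]_#|C|) (S : {set T}) :=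
  \sum_(j < #|C|) (enum_val j == S)%:R * u 0 j.

Lemma fvE C (u : 'rV[R]_#|C|) j : fv u (enum_val j) = u 0 j.
Proof.
rewrite /fv (bigD1 j) //= eqxx mul1r big1 ?addr0 // => k hk.
by rewrite (inj_eq enum_val_inj) (negbTE hk) mul0r.
Qed.

Lemma vec_fv C (u : 'rV[R]_#|C|) : vec C (fv u) = u.
Proof. by apply/rowP => j; rewrite mxE fvE. Qed.

Lemma kern_row C c x :
  \sum_(S in C | x \in S) c S = \sum_(j < #|C|) c (enum_val j) * (x \in enum_val j)%:R.
Proof.
rewrite big_mkcondr big_enum_val.
have -> // : \sum_(j < #|C|) c (enum_val j) * (x \in enum_val j)%:R = \sum_(j < #|C|) (if x \in enum_val j then c (enum_val j) else 0).
by apply: eq_bigr => j _; case: (x \in _); rewrite ?mulr1 ?mulr0.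
Qed.

Lemma vec_kern N C c : kern N C c <-> vec C c *m (incidence_mx R N C)^T = 0.
Proof.
split.
  move=> hc; apply/rowP => i; rewrite !mxE.
  rewrite -[RHS](hc _ (enum_valP i)) kern_row.
  by apply: eq_bigr => j _; rewrite !mxE.
move=> h x hx; rewrite kern_row.
have := congr1 (fun M : 'rV[R]_#|N| => M 0 (enum_rank_in hx x)) h; rewrite !mxE => h'.
rewrite -[RHS]h'.
by apply: eq_bigr => j _; rewrite !mxE enum_rankK_in.
Qed.

Lemma vec_eq0 C c : vec C c = 0 -> forall S, S \in C -> c S = 0.
Proof.
move=> h S hS; have := congr1 (fun M : 'rV[R]_#|C| => M 0 (enum_rank_in hS S)) h.
by rewrite !mxE enum_rankK_in.
Qed.

Lemma kern_rank N C d : kern N C d -> (exists2 S, S \in C & d S != 0) ->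
  (forall e, kern N C e -> exists s, forall S, S \in C -> e S = s * d S) ->
  \rank (incidence_mx R N C) = #|C|.-1.
Proof.
move=> hd [S0 S0C dS0] hall.
set A := incidence_mx R N C.
have hvd : (vec C d <= kermx A^T)%MS by apply/sub_kermxP; apply/vec_kern.
have vd0 : vec C d != 0.
  by apply: contra dS0 => /eqP h; rewrite (vec_eq0 h S0C).
have hK : (kermx A^T <= vec C d)%MS.
  apply/row_subP => i.
  have hri : row i (kermx A^T) *m A^T = 0 by apply/sub_kermxP; apply: row_sub.
  move: hri; rewrite -[row i _]vec_fv => /vec_kern /hall [s hs].
  apply/sub_rVP; exists s; rewrite vec_fv; apply/rowP => j.
  by rewrite -(fvE (row i (kermx A^T)) j) hs ?enum_valP // !mxE.
have r1 : \rank (kermx A^T) = 1%N.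
  apply/eqP; rewrite eqn_leq; apply/andP; split.
    by have := mxrankS hK; rewrite rank_rV vd0.
  by have := mxrankS hvd; rewrite rank_rV vd0.
move: r1; rewrite mxrank_ker mxrank_tr.
have := rank_leq_col A; rewrite -subn1; lia.
Qed.

Lemma rank_kern N C d : \rank (incidence_mx R N C) = #|C|.-1 -> kern N C d ->
  (exists2 S, S \in C & d S != 0) ->
  forall e, kern N C e -> exists s, forall S, S \in C -> e S = s * d S.
Proof.
move=> hr hd [S0 S0C dS0] e he.
set A := incidence_mx R N C.
have hvd : (vec C d <= kermx A^T)%MS by apply/sub_kermxP; apply/vec_kern.
have hve : (vec C e <= kermx A^T)%MS by apply/sub_kermxP; apply/vec_kern.
have vd0 : vec C d != 0.
  by apply: contra dS0 => /eqP h; rewrite (vec_eq0 h S0C).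
have hC : (0 < #|C|)%N by apply/card_gt0P; exists S0.
have r1 : \rank (kermx A^T) = 1%N.
  by rewrite mxrank_ker mxrank_tr hr; move: hC; rewrite -subn1; lia.
have : (vec C d == kermx A^T)%MS.
  by case: (mxrank_leqif_eq hvd) => _ <-; rewrite rank_rV vd0 r1.
case/andP => _ hK.
have /sub_rVP [s hs] := submx_trans hve hK.
exists s => S hS; have := congr1 (fun M : 'rV[R]_#|C| => M 0 (enum_rank_in hS S)) hs.
by rewrite !mxE enum_rankK_in.
Qed.

End Aux.

Section Back.
Variables (R : realFieldType) (T : finType).
Implicit Types (p : T) (N S : {set T}) (B C I : {set {set T}}) (f g w c v d e lam F mu nu : {set T} -> R).

Lemma sum_ind1 B (A : {set T}) x :
  \sum_(S in B | x \in S) ((S == A)%:R : R) = ((A \in B) && (x \in A))%:R.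
Proof.
have := sum_ind B A x (1 : R); rewrite mulr1 => <-.
by apply: eq_bigr => S _; rewrite mulr1.
Qed.

Lemma lift_forall p I C (P : {set T} -> Prop) : I \subset C ->
  (forall S, S \in C -> P (phi p I S)) -> forall S', S' \in lift_coll p I C -> P S'.
Proof. by move=> hIC h S'; rewrite lift_eqE // => /imsetP[S hS ->]; apply: h. Qed.

Lemma phi_sub p I S : S \subset phi p I S.
Proof. by rewrite /phi; case: (S \in I) => //; apply: subsetUr. Qed.

Lemma kern_lift N p I C c : collection_on N C -> p \notin N -> I \subset C ->
  kern (p |: N) (lift_coll p I C) c -> kern N C (fun S => c (phi p I S)).
Proof.
move=> hcol hp hIC hc x hx; rewrite -(lift_rowN _ hcol hp hIC hx).
by apply: hc; rewrite inE hx orbT.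
Qed.

Lemma sum_phiK N p I C F : collection_on N C -> p \notin N -> I \subset C ->
  \sum_(S in I) F (phi p I S :\ p) = \sum_(S in I) F S.
Proof.
by move=> hcol hp hIC; apply: eq_bigr => S hS; rewrite (phiK _ hcol hp) // (subsetP hIC).
Qed.

Lemma sum_rowN_phiK N p I C F x : collection_on N C -> p \notin N ->
  \sum_(S in C | x \in S) F (phi p I S :\ p) = \sum_(S in C | x \in S) F S.
Proof. by move=> hcol hp; apply: eq_bigr => S /andP[hS _]; rewrite (phiK _ hcol hp). Qed.

Lemma setp_notin_lift N p I C : collection_on N C -> p \notin N -> I \subset C ->
  [set p] \notin lift_coll p I C.
Proof.
move=> hcol hp hIC; apply/negP => hin.
apply: (lift_forall (P := fun S' => S' <> [set p]) hIC _ hin) => //.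
move=> S hS e; case: (hcol S hS) => /set0Pn [y hy] hsub.
have hyp : y != p by apply: contraNneq hp => <-; apply: (subsetP hsub).
by have := subsetP (phi_sub p I S) _ hy; rewrite e inE (negbTE hyp).
Qed.

Lemma back1 N p C lam I : p \notin N ->
  minimal_balanced R N C -> balancing N C lam -> I \subset C ->
  \sum_(S in I) lam S = 1 -> minimal_balanced R (p |: N) (lift_coll p I C).
Proof.
move=> hp /mb_iff [[hcol _] hind] [lpos lsum] hIC hI; apply/mb_iff; split.
  split; first exact: lift_collection.
  exists (fun S' => lam (S' :\ p)); split.
    apply: (lift_forall (P := fun S' => 0 < lam (S' :\ p))) => // S hS.
    by rewrite (phiK _ hcol hp hS) lpos.
  move=> x; rewrite in_setU1 => /orP[/eqP->|hx].
    by rewrite (lift_rowp _ hcol hp hIC) (sum_phiK _ hcol hp hIC).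
  by rewrite (lift_rowN _ hcol hp hIC hx) (sum_rowN_phiK _ _ _ hcol hp) lsum.
move=> c hc; apply: (lift_forall (P := fun S' => c S' = 0)) => // S hS.
exact: (hind _ (kern_lift hcol hp hIC hc)).
Qed.

Lemma neqp_of_N N p x : p \notin N -> x \in N -> (x == p) = false.
Proof. by move=> hp hx; apply/negbTE; apply: contraNneq hp => <-. Qed.

Lemma back2 N p C lam I : p \notin N ->
  minimal_balanced R N C -> balancing N C lam -> I \subset C ->
  \sum_(S in I) lam S < 1 ->
  minimal_balanced R (p |: N) (lift_coll p I C :|: [set [set p]]).
Proof.
move=> hp /mb_iff [[hcol _] hind] [lpos lsum] hIC hI.
have hnin := setp_notin_lift hcol hp hIC.
set L := lift_coll p I C; rewrite (setUC L).
have hcolL : collection_on (p |: N) L by apply: lift_collection.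
apply/mb_iff; split.
  split.
    move=> S'; rewrite in_setU1 => /orP[/eqP->|hS]; last exact: hcolL.
    split; first by apply/set0Pn; exists p; rewrite inE.
    by rewrite sub1set setU11.
  exists (fun S' => if S' == [set p] then 1 - \sum_(S in I) lam S else lam (S' :\ p)).
  split.
    move=> S'; rewrite in_setU1 => /orP[/eqP->|hS]; first by rewrite eqxx subr_gt0.
    have hne : S' != [set p] by apply: contraNneq hnin => <-.
    rewrite (negbTE hne).
    apply: (lift_forall (P := fun S' => 0 < lam (S' :\ p)) hIC _ hS) => S hS0.
    by rewrite (phiK _ hcol hp hS0) lpos.
  move=> x hx; rewrite sum_setU1 // eqxx.
  rewrite [\sum_(S in L | _) _](eq_bigr (fun S' => lam (S' :\ p))); last first.
    move=> S' /andP[hS _]; rewrite ifN //; by apply: contraNneq hnin => <-.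
  move: hx; rewrite in_setU1 => /orP[/eqP->|hx].
    by rewrite inE eqxx mul1r (lift_rowp _ hcol hp hIC) (sum_phiK _ hcol hp hIC) subrK.
  rewrite inE (neqp_of_N hp hx) mul0r add0r.
  by rewrite (lift_rowN _ hcol hp hIC hx) (sum_rowN_phiK _ _ _ hcol hp) lsum.
move=> c hc.
have hc' : kern N C (fun S => c (phi p I S)).
  move=> x hx; have := hc x; rewrite inE hx orbT => /(_ isT).
  by rewrite sum_setU1 // inE (neqp_of_N hp hx) mul0r add0r (lift_rowN _ hcol hp hIC hx).
have hcp : c [set p] = 0.
  have := hc p (setU11 _ _); rewrite sum_setU1 // inE eqxx mul1r (lift_rowp _ hcol hp hIC).
  rewrite big1 ?addr0 // => S hS; apply: (hind _ hc'); exact: (subsetP hIC).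
move=> S'; rewrite in_setU1 => /orP[/eqP->|hS] //.
apply: (lift_forall (P := fun S' => c S' = 0) hIC _ hS) => S hS0.
exact: (hind _ hc').
Qed.

Lemma back3 N p C lam I (dl : {set T}) : p \notin N ->
  minimal_balanced R N C -> balancing N C lam -> I \subset C -> dl \in C :\: I ->
  \sum_(S in I) lam S < 1 -> 1 - lam dl < \sum_(S in I) lam S ->
  minimal_balanced R (p |: N) (lift_coll p I C :|: [set p |: dl]).
Proof.
move=> hp /mb_iff [[hcol _] hind] [lpos lsum] hIC; rewrite inE => /andP[hdI hdC].
set lI := \sum_(S in I) lam S => hI1 hI2.
have hpd : p \notin dl := notin_C hcol hp hdC.
have phid : phi p I dl = dl by rewrite /phi (negbTE hdI).
set L := lift_coll p I C; rewrite (setUC L).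
have hdL : dl \in L by rewrite -{1}phid lift_mem.
have hnin : p |: dl \notin L.
  apply/negP => hin.
  apply: (lift_forall (P := fun S' => S' <> p |: dl) hIC _ hin) => // S hS e.
  have eS : S = dl by rewrite -(phiK I hcol hp hS) e setU1K.
  by move: hpd; rewrite -{1}phid -eS e setU11.
have hcolL : collection_on (p |: N) L by apply: lift_collection.
have phiS S : S \in C -> phi p I S = dl -> S = dl.
  by move=> hS e; rewrite -(phiK I hcol hp hS) e setD1_notin.
apply/mb_iff; split.
  split.
    move=> S'; rewrite in_setU1 => /orP[/eqP->|hS]; last exact: hcolL.
    have [hne hsub] := hcol dl hdC; split.
      by apply/set0Pn; exists p; rewrite setU11.
    by apply: setUS.
  exists (fun S' => if S' == p |: dl then 1 - lI
                    else lam (S' :\ p) - (S' == dl)%:R * (1 - lI)).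
  split.
    move=> S'; rewrite in_setU1 => /orP[/eqP->|hS]; first by rewrite eqxx subr_gt0.
    have hne : S' != p |: dl by apply: contraNneq hnin => <-.
    rewrite (negbTE hne).
    apply: (lift_forall (P := fun S' => 0 < lam (S' :\ p) - (S' == dl)%:R * (1 - lI))
       hIC _ hS) => S hS0.
    rewrite (phiK _ hcol hp hS0); case: eqP => [e|_].
      by rewrite (phiS S hS0 e) mul1r; lra.
    by rewrite mul0r subr0 lpos.
  move=> x hx; rewrite sum_setU1 // eqxx.
  rewrite [\sum_(S in L | _) _](eq_bigr (fun S' => lam (S' :\ p) - (S' == dl)%:R * (1 - lI))); last first.
    move=> S' /andP[hS _]; rewrite ifN //; by apply: contraNneq hnin => <-.
  rewrite sumrB sum_ind hdL /=.
  move: hx; rewrite in_setU1 => /orP[/eqP->|hx].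
    rewrite setU11 (negbTE hpd) mul1r mul0r subr0.
    rewrite (lift_rowp _ hcol hp hIC) (sum_phiK _ hcol hp hIC).
    by rewrite -/lI subrK.
  rewrite in_setU1 (neqp_of_N hp hx) /=.
  rewrite (lift_rowN _ hcol hp hIC hx) (sum_rowN_phiK _ _ _ hcol hp) lsum //.
  by rewrite addrC subrK.
move=> c hc.
pose c' S := c (phi p I S) + (S == dl)%:R * c (p |: dl).
have hc' : kern N C c'.
  move=> x hx; have := hc x; rewrite inE hx orbT => /(_ isT).
  rewrite sum_setU1 // in_setU1 (neqp_of_N hp hx) /= (lift_rowN _ hcol hp hIC hx).
  by rewrite /c' big_split /= sum_ind hdC /= addrC.
have hz := hind c' hc'.
have hcp : c (p |: dl) = 0.
  have := hc p (setU11 _ _); rewrite sum_setU1 // setU11 mul1r (lift_rowp _ hcol hp hIC).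
  rewrite big1 ?addr0 // => S hS.
  have := hz S (subsetP hIC _ hS); rewrite /c'.
  have -> : (S == dl) = false by apply/negbTE; apply: contraNneq hdI => <-.
  by rewrite mul0r addr0.
move=> S'; rewrite in_setU1 => /orP[/eqP->|hS] //.
apply: (lift_forall (P := fun S' => c S' = 0) hIC _ hS) => S hS0.
by have := hz S hS0; rewrite /c' hcp mulr0 addr0.
Qed.

Lemma sum_ind_I I (A : {set {set T}}) f :
  \sum_(S in I) ((S \in A)%:R * f S) = \sum_(S in I :&: A) f S.
Proof.
rewrite big_mkcond [RHS]big_mkcond; apply: eq_bigr => S _; rewrite inE.
by case: (S \in I); case: (S \in A); rewrite ?mul1r ?mul0r.
Qed.

Lemma collectionU N C1 C2 : collection_on N C1 -> collection_on N C2 ->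
  collection_on N (C1 :|: C2).
Proof. by move=> h1 h2 S; rewrite inE => /orP[/h1|/h2]. Qed.

Lemma back4 N p C1 C2 mu nu I : p \notin N ->
  minimal_balanced R N C1 -> minimal_balanced R N C2 -> C1 != C2 ->
  balancing N C1 mu -> balancing N C2 nu ->
  \rank (incidence_mx R N (C1 :|: C2)) = #|C1 :|: C2|.-1 -> I \subset C1 :|: C2 ->
  \sum_(S in I :&: C1) mu S != \sum_(S in I :&: C2) nu S ->
  0 < (1 - \sum_(S in I :&: C1) mu S) / (\sum_(S in I :&: C2) nu S - \sum_(S in I :&: C1) mu S) ->
  (1 - \sum_(S in I :&: C1) mu S) / (\sum_(S in I :&: C2) nu S - \sum_(S in I :&: C1) mu S) < 1 ->
  minimal_balanced R (p |: N) (lift_coll p I (C1 :|: C2)).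
Proof.
move=> hp /mb_iff [[hcol1 _] _] /mb_iff [[hcol2 _] _] hne [mpos msum] [npos nsum] hr hIC.
set muI := \sum_(S in I :&: C1) mu S; set nuI := \sum_(S in I :&: C2) nu S.
set t := (1 - muI) / (nuI - muI) => hmn ht0 ht1.
set C := C1 :|: C2.
have hcol : collection_on N C by apply: collectionU.
pose m0 S := (S \in C1)%:R * mu S; pose n0 S := (S \in C2)%:R * nu S.
have m0ge S : 0 <= m0 S by rewrite /m0; case: (S \in C1) /idP => h;
  rewrite ?mul1r ?mul0r // ltW // mpos.
have n0ge S : 0 <= n0 S by rewrite /n0; case: (S \in C2) /idP => h;
  rewrite ?mul1r ?mul0r // ltW // npos.
have m0sum x : x \in N -> \sum_(S in C | x \in S) m0 S = 1.
  by move=> hx; rewrite sum_sub_ind ?msum // subsetUl.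
have n0sum x : x \in N -> \sum_(S in C | x \in S) n0 S = 1.
  by move=> hx; rewrite sum_sub_ind ?nsum // subsetUr.
have hmn' : nuI - muI != 0 by rewrite subr_eq0 eq_sym.
apply/mb_iff; split.
  split; first exact: lift_collection.
  exists (fun S' => (1 - t) * m0 (S' :\ p) + t * n0 (S' :\ p)); split.
    apply: (lift_forall (P := fun S' => 0 < (1 - t) * m0 (S' :\ p) + t * n0 (S' :\ p)))
      => // S hS.
    rewrite (phiK _ hcol hp hS).
    have := m0ge S; have := n0ge S.
    move: hS; rewrite inE => /orP[h|h].
      have : 0 < m0 S by rewrite /m0 h mul1r mpos.
      move=> *; nra.
    have : 0 < n0 S by rewrite /n0 h mul1r npos.
    move=> *; nra.
  move=> x; rewrite in_setU1 => /orP[/eqP->|hx].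
    rewrite (lift_rowp _ hcol hp hIC) (sum_phiK (fun X => (1 - t) * m0 X + t * n0 X) hcol hp hIC).
    rewrite big_split /= -!mulr_sumr !sum_ind_I -/muI -/nuI /t.
    by field.
  rewrite (lift_rowN _ hcol hp hIC hx) (sum_rowN_phiK _ (fun X => (1 - t) * m0 X + t * n0 X) _ hcol hp).
  by rewrite big_split /= -!mulr_sumr m0sum // n0sum // !mulr1 subrK.
move=> c hc.
have hc' := kern_lift hcol hp hIC hc.
pose d S := n0 S - m0 S.
have hd : kern N C d by move=> x hx; rewrite sumrB m0sum // n0sum // subrr.
have hdnz : exists2 S, S \in C & d S != 0.
  case/boolP: [exists S, (S \in C1) != (S \in C2)] => [/existsP[S hS]|/existsPn h].
    exists S.
      by move: hS; rewrite inE; case: (S \in C1); case: (S \in C2).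
    rewrite /d /n0 /m0; move: hS.
    case h1: (S \in C1); case h2: (S \in C2) => //= _.
      by rewrite mul0r mul1r sub0r oppr_eq0 lt0r_neq0 // mpos.
    by rewrite mul0r mul1r subr0 lt0r_neq0 // npos.
  by case/eqP: hne; apply/setP => S; have := h S; rewrite negbK => /eqP.
have [s hs] := rank_kern hr hd hdnz hc'.
have hs0 : s = 0.
  have := hc p (setU11 _ _); rewrite (lift_rowp _ hcol hp hIC).
  rewrite (eq_bigr (fun S => s * d S)); last by move=> S hS; rewrite hs // (subsetP hIC).
  rewrite -mulr_sumr sumrB !sum_ind_I -/muI -/nuI => /eqP.
  by rewrite mulf_eq0 (negbTE hmn') orbF => /eqP.
apply: (lift_forall (P := fun S' => c S' = 0)) => // S hS.
by rewrite hs // hs0 mul0r.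
Qed.
End Back.

Section Fwd.
Variables (R : realFieldType) (T : finType).
Implicit Types (p : T) (N S : {set T}) (B C I : {set {set T}})
  (f g w c v d e lam F mu nu : {set T} -> R).

Lemma arith1 (l a b dd : R) : 0 < a -> 0 < b -> 0 < l -> l - a * dd <= 0 ->
  l - b * (- dd) <= 0 -> 0 <= l - a * dd -> 0 <= l - b * (- dd) -> False.
Proof. move=> *; nra. Qed.

Lemma arith2 (l b dd : R) : 0 < b -> 0 < l -> 0 < dd -> 0 < l - b * (- dd).
Proof. move=> *; nra. Qed.

Lemma pair_contra N p B dl : p \notin N -> indep R (p |: N) B ->
  [set p] \in B -> dl \in B -> p \notin dl -> p |: dl \in B -> dl != set0 -> False.
Proof.
move=> hp hind h1 h2 hpd h3 hne.
pose c S : R := (S == p |: dl)%:R - (S == dl)%:R - (S == [set p])%:R.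
have hc : kern (p |: N) B c.
  move=> x hx; rewrite /c !sumrB !sum_ind1 h1 h2 h3 /= !inE.
  case: (x =P p) => [->|_]; rewrite ?(negbTE hpd) /=; first by ring.
  by case: (x \in dl); rewrite /=; ring.
have := hind c hc _ h3; rewrite /c eqxx.
have -> : (p |: dl == dl) = false.
  by apply/negbTE; apply: contraNneq hpd => <-; rewrite setU11.
have -> : (p |: dl == [set p]) = false.
  apply/negbTE; case/set0Pn: hne => y hy; apply/negP => /eqP e.
  have : y \in p |: dl by rewrite setU1r.
  by rewrite e inE => /eqP hyp; move: hpd; rewrite -hyp hy.
by move/eqP; rewrite /= subr0 subr0 oner_eq0.
Qed.

Lemma twopairs_contra N p B dl gm : p \notin N -> indep R (p |: N) B ->
  dl \in B -> p \notin dl -> p |: dl \in B ->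
  gm \in B -> p \notin gm -> p |: gm \in B -> dl != gm -> False.
Proof.
move=> hp hind h1 hpd h2 h3 hpg h4 hne.
pose c S : R := (S == p |: dl)%:R - (S == dl)%:R - (S == p |: gm)%:R + (S == gm)%:R.
have hc : kern (p |: N) B c.
  move=> x hx; rewrite /c big_split /= !sumrB !sum_ind1 h1 h2 h3 h4 /= !in_setU1.
  case: (x =P p) => [->|_]; rewrite ?(negbTE hpd) ?(negbTE hpg) /=; first by ring.
  by case: (x \in dl); case: (x \in gm); rewrite /=; ring.
have := hind c hc _ h2; rewrite /c eqxx.
have -> : (p |: dl == dl) = false.
  by apply/negbTE; apply: contraNneq hpd => <-; rewrite setU11.
have -> : (p |: dl == p |: gm) = false.
  apply/negbTE; apply: contra hne => /eqP e.
  by rewrite -(setU1K hpd) e setU1K.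
have -> : (p |: dl == gm) = false.
  by apply/negbTE; apply: contraNneq hpg => <-; rewrite setU11.
by move/eqP; rewrite /= subr0 subr0 addr0 oner_eq0.
Qed.

Lemma pos_exists C d x S0 : \sum_(S in C | x \in S) d S = 0 -> S0 \in C -> x \in S0 ->
  d S0 != 0 -> exists2 S, S \in C & 0 < d S.
Proof.
move=> hsum hS0 hx hne.
case: (pickP [pred S | (S \in C) && (0 < d S)]) => [S /andP[h1 h2]|h]; first by exists S.
exfalso.
have hle : forall S, (S \in C) && (x \in S) -> 0 <= - d S.
  move=> S /andP[hS _]; have := h S; rewrite /= hS /= => /negbT.
  by rewrite -leNgt oppr_ge0.
have hz := psumr_eq0P hle; move: hz; rewrite sumrN hsum oppr0 => /(_ erefl S0).
by rewrite hS0 hx => /(_ isT) /eqP; rewrite oppr_eq0 (negbTE hne).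
Qed.

Lemma indep_sub N C C' d Sa : C' \subset C ->
  (forall f, kern N C f -> exists s, forall S, S \in C -> f S = s * d S) ->
  Sa \in C -> Sa \notin C' -> d Sa != 0 -> indep R N C'.
Proof.
move=> hsub K1 hSa hSa' hd e he.
pose e0 S := (S \in C')%:R * e S.
have he0 : kern N C e0 by move=> x hx; rewrite /e0 sum_sub_ind // he.
have [s hs] := K1 _ he0.
have s0 : s = 0.
  have := hs _ hSa; rewrite /e0 (negbTE hSa') mul0r => /esym/eqP.
  by rewrite mulf_eq0 (negbTE hd) orbF => /eqP.
by move=> S hS; have := hs _ (subsetP hsub _ hS); rewrite /e0 hS mul1r s0 mul0r.
Qed.


Lemma fwd_i N p B w : p \notin N -> collection_on (p |: N) B ->
  balancing (p |: N) B w -> indep R (p |: N) B -> [set p] \in B ->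
  exists C lam I, [/\ minimal_balanced R N C, balancing N C lam, I \subset C,
    \sum_(S in I) lam S < 1 & B = lift_coll p I C :|: [set [set p]]].
Proof.
move=> hp hcolB [wpos wsum] hind hpB.
set B' := B :\ [set p].
have hsubB : B' \subset B by apply: subD1set.
have hcolB' := collection_sub hcolB hsubB.
have hnp : forall S, S \in B' -> p \notin S -> p |: S \notin B'.
  move=> S hS hpS; apply/negP => hin.
  have hSB := subsetP hsubB _ hS; have [hne _] := hcolB S hSB.
  exact: (pair_contra hp hind hpB hSB hpS (subsetP hsubB _ hin) hne).
have [hcolC hIC eB'] := decomp hp hcolB' hnp (negbT (setD11 _ _)).
move: eB'; set C := [set S :\ p | S in B']; set I := [set S :\ p | S in B' & p \in S].
set L := lift_coll p I C => eB'.
have hB : B = [set p] |: L by rewrite -eB' setD1K.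
have hnin : [set p] \notin L := setp_notin_lift hcolC hp hIC.
have hLB : forall S, S \in C -> phi p I S \in B.
  by move=> S hS; rewrite hB setU1r // lift_mem.
exists C, (fun S => w (phi p I S)), I; split => //.
- apply/mb_iff; split.
    split => //; exists (fun S => w (phi p I S)); split.
      by move=> S hS; apply: wpos; apply: hLB.
    move=> x hx; have := wsum x; rewrite inE hx orbT => /(_ isT).
    by rewrite hB sum_setU1 // inE (neqp_of_N hp hx) mul0r add0r (lift_rowN _ hcolC hp hIC hx).
  move=> e he.
  pose c S' := if S' == [set p] then - \sum_(S in I) e S else e (S' :\ p).
  have hc : kern (p |: N) B c.
    move=> x hx; rewrite hB sum_setU1 // /c eqxx.
    rewrite [\sum_(S in L | _) _](eq_bigr (fun S' => e (S' :\ p))); last first.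
      move=> S' /andP[hS _]; rewrite ifN //; by apply: contraNneq hnin => <-.
    move: hx; rewrite in_setU1 => /orP[/eqP->|hx].
      by rewrite inE eqxx mul1r (lift_rowp _ hcolC hp hIC) (sum_phiK _ hcolC hp hIC) addNr.
    rewrite inE (neqp_of_N hp hx) mul0r add0r.
    by rewrite (lift_rowN _ hcolC hp hIC hx) (sum_rowN_phiK _ _ _ hcolC hp) he.
  move=> S hS; have := hind c hc _ (hLB S hS); rewrite /c ifN ?(phiK _ hcolC hp hS) //.
  by apply: contraNneq hnin => <-; apply: lift_mem.
- split; first by move=> S hS; apply: wpos; apply: hLB.
  move=> x hx; have := wsum x; rewrite inE hx orbT => /(_ isT).
  by rewrite hB sum_setU1 // inE (neqp_of_N hp hx) mul0r add0r (lift_rowN _ hcolC hp hIC hx).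
- have := wsum p (setU11 _ _); rewrite hB sum_setU1 // inE eqxx mul1r.
  rewrite (lift_rowp _ hcolC hp hIC) => h.
  have := wpos _ hpB; lra.
- by rewrite hB setUC.
Qed.

Lemma fwd_ii N p B w dl : p \notin N -> collection_on (p |: N) B ->
  balancing (p |: N) B w -> indep R (p |: N) B -> [set p] \notin B ->
  dl \in B -> p \notin dl -> p |: dl \in B ->
  exists C lam I dl',
     [/\ minimal_balanced R N C, balancing N C lam, I \subset C /\ dl' \in C :\: I,
         \sum_(S in I) lam S < 1 /\ 1 - lam dl' < \sum_(S in I) lam S &
         B = lift_coll p I C :|: [set p |: dl']].
Proof.
move=> hp hcolB [wpos wsum] hind hpB hdB hpd hpdB.
set B' := B :\ (p |: dl).
have hsubB : B' \subset B by apply: subD1set.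
have hcolB' := collection_sub hcolB hsubB.
have hnp : forall S, S \in B' -> p \notin S -> p |: S \notin B'.
  move=> S hS hpS; apply/negP => hin.
  have hSB := subsetP hsubB _ hS.
  have hne : dl != S.
    by apply/negP => /eqP e; move: hin; rewrite -e /B' setD11.
  exact: (twopairs_contra hp hind hdB hpd hpdB hSB hpS (subsetP hsubB _ hin) hne).
have hpB' : [set p] \notin B' by apply: contra hpB; apply: (subsetP hsubB).
have [hcolC hIC eB'] := decomp hp hcolB' hnp hpB'.
have hdB' : dl \in B'.
  by rewrite !inE hdB andbT; apply: contraNneq hpd => e; rewrite e setU11.
have hdC : dl \in [set S :\ p | S in B'].
  by apply/imsetP; exists dl; rewrite ?setD1_notin.
have hdI : dl \notin [set S :\ p | S in B' & p \in S].
  apply/negP => /imsetP[S]; rewrite inE => /andP[hS hpS] e.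
  by move: hS; rewrite -(setD1K hpS) -e !inE eqxx.
move: eB' hdC hdI; set C := [set S :\ p | S in B']; set I := [set S :\ p | S in B' & p \in S].
set L := lift_coll p I C => eB' hdC hdI.
have hnin : p |: dl \notin L by rewrite -eB' setD11.
have hB : B = (p |: dl) |: L by rewrite -eB' setD1K.
have phid : phi p I dl = dl by rewrite /phi (negbTE hdI).
have hLB : forall S, S \in C -> phi p I S \in B.
  by move=> S hS; rewrite hB setU1r // lift_mem.
have hdL : dl \in L by rewrite -phid lift_mem.
pose lam S := w (phi p I S) + (S == dl)%:R * w (p |: dl).
have hlam : balancing N C lam.
  split.
    move=> S hS; rewrite /lam; have := wpos _ (hLB S hS); have := wpos _ hpdB.
    by case: (S == dl); rewrite ?mul1r ?mul0r ?addr0 //; lra.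
  move=> x hx; have := wsum x; rewrite inE hx orbT => /(_ isT).
  rewrite hB sum_setU1 // in_setU1 (neqp_of_N hp hx) /= (lift_rowN _ hcolC hp hIC hx).
  by rewrite /lam big_split /= sum_ind hdC /= addrC.
have hprow : w (p |: dl) + \sum_(S in I) w (phi p I S) = 1.
  have := wsum p (setU11 _ _); rewrite hB sum_setU1 // setU11 mul1r.
  by rewrite (lift_rowp _ hcolC hp hIC).
have hlamI : \sum_(S in I) lam S = \sum_(S in I) w (phi p I S).
  rewrite /lam big_split /= [X in _ + X]big1 ?addr0 // => S hS.
  have -> : (S == dl) = false by apply/negbTE; apply: contraNneq hdI => <-.
  by rewrite mul0r.
exists C, lam, I, dl; split => //.
- apply/mb_iff; split; first by split => //; exists lam.
  move=> e he; set eI := \sum_(S in I) e S.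
  pose c S' := if S' == p |: dl then - eI else e (S' :\ p) + (S' == dl)%:R * eI.
  have hc : kern (p |: N) B c.
    move=> x hx; rewrite hB sum_setU1 // /c eqxx.
    rewrite [\sum_(S in L | _) _](eq_bigr (fun S' => e (S' :\ p) + (S' == dl)%:R * eI)); last first.
      move=> S' /andP[hS _]; rewrite ifN //; by apply: contraNneq hnin => <-.
    rewrite big_split /= sum_ind hdL /=.
    move: hx; rewrite in_setU1 => /orP[/eqP->|hx].
      rewrite setU11 (negbTE hpd) mul1r mul0r addr0.
      by rewrite (lift_rowp _ hcolC hp hIC) (sum_phiK _ hcolC hp hIC) addNr.
    rewrite in_setU1 (neqp_of_N hp hx) /=.
    rewrite (lift_rowN _ hcolC hp hIC hx) (sum_rowN_phiK _ _ _ hcolC hp) he // add0r.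
    by rewrite mulrN addNr.
  have heI : eI = 0.
    by have := hind c hc _ hpdB; rewrite /c eqxx => /eqP; rewrite oppr_eq0 => /eqP.
  move=> S hS; have := hind c hc _ (hLB S hS); rewrite /c ifN ?(phiK _ hcolC hp hS).
    by rewrite heI mulr0 addr0.
  by apply: contraNneq hnin => <-; apply: lift_mem.
- by split; rewrite // inE hdI hdC.
- rewrite hlamI; split; first by have := wpos _ hpdB; lra.
  rewrite /lam phid eqxx mul1r; have := wpos _ hdB; lra.
- by rewrite hB setUC.
Qed.

Lemma fwd_iii N p B w : p \notin N -> collection_on (p |: N) B ->
  balancing (p |: N) B w -> indep R (p |: N) B -> [set p] \notin B ->
  (forall S, S \in B -> p \notin S -> p |: S \notin B) ->
  (exists C lam I,
     [/\ minimal_balanced R N C, balancing N C lam, I \subset C,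
         \sum_(S in I) lam S = 1 & B = lift_coll p I C]) \/
  (exists (C1 C2 : {set {set T}}) mu nu I,
     [/\ minimal_balanced R N C1 /\ minimal_balanced R N C2, C1 != C2,
         balancing N C1 mu /\ balancing N C2 nu,
         \rank (incidence_mx R N (C1 :|: C2)) = (#|C1 :|: C2|).-1 /\
           I \subset C1 :|: C2 &
         let muI := \sum_(S in I :&: C1) mu S in
         let nuI := \sum_(S in I :&: C2) nu S in
         [/\ muI != nuI, 0 < (1 - muI) / (nuI - muI),
             (1 - muI) / (nuI - muI) < 1 & B = lift_coll p I (C1 :|: C2)]]).
Proof.
move=> hp hcolB [wpos wsum] hind hpB hnp.
have [hcolC hIC eB] := decomp hp hcolB hnp hpB.
move: eB; set C := [set S :\ p | S in B]; set I := [set S :\ p | S in B & p \in S].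
move=> eB.
have hLB : forall S, S \in C -> phi p I S \in B.
  by move=> S hS; rewrite eB lift_mem.
pose lam S := w (phi p I S).
have hlam : balancing N C lam.
  split; first by move=> S hS; apply: wpos; apply: hLB.
  move=> x hx; have := wsum x; rewrite inE hx orbT => /(_ isT).
  by rewrite eB (lift_rowN _ hcolC hp hIC hx).
have hlamI : \sum_(S in I) lam S = 1.
  by have := wsum p (setU11 _ _); rewrite eB (lift_rowp _ hcolC hp hIC).
have zero_of_I : forall g, kern N C g -> \sum_(S in I) g S = 0 ->
    forall S, S \in C -> g S = 0.
  move=> g hg hgI.
  have hc : kern (p |: N) B (fun S' => g (S' :\ p)).
    move=> x; rewrite eB in_setU1 => /orP[/eqP->|hx].
      by rewrite (lift_rowp _ hcolC hp hIC) (sum_phiK _ hcolC hp hIC).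
    by rewrite (lift_rowN _ hcolC hp hIC hx) (sum_rowN_phiK _ _ _ hcolC hp) hg.
  by move=> S hS; have := hind _ hc _ (hLB S hS); rewrite (phiK _ hcolC hp hS).
case: (classic (indep R N C)) => hi.
  left; exists C, lam, I; split => //; apply/mb_iff; split => //.
  by split => //; exists lam.
right.
have [d [hd [S0 S0C dS0]]] : exists d, kern N C d /\ exists2 S, S \in C & d S != 0.
  apply: NNPP => hn; apply: hi => d hd S hS; apply: NNPP => hne; apply: hn.
  by exists d; split => //; exists S => //; apply/eqP.
set dI := \sum_(S in I) d S.
have dI0 : dI != 0.
  by apply: contra dS0 => /eqP h; apply/eqP; apply: (zero_of_I _ hd h).
have K1 : forall f, kern N C f -> exists s, forall S, S \in C -> f S = s * d S.
  move=> f hf; exists ((\sum_(S in I) f S) / dI) => S hS.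
  have hg : kern N C (fun S => f S - (\sum_(S in I) f S) / dI * d S).
    by move=> x hx; rewrite sum_lin hf // hd // mulr0 subr0.
  have := zero_of_I _ hg; rewrite sumrB -mulr_sumr -/dI divfK // subrr.
  by move=> /(_ erefl S hS) /eqP; rewrite subr_eq0 => /eqP.
have [x hxS0] : exists x, x \in S0.
  by case: (hcolC S0 S0C) => /set0Pn [x hx] _; exists x.
have hxN : x \in N by case: (hcolC S0 S0C) => _ /subsetP; apply.
have hpos := pos_exists (hd x hxN) S0C hxS0 dS0.
have hnd : kern N C (fun S => - d S).
  by move=> y hy; rewrite sumrN hd // oppr0.
have hneg := pos_exists (hnd x hxN) S0C hxS0 (ltac:(by rewrite oppr_eq0)).
have [a [apos hgea [Sa [SaC dSa hSa]]]] := shrink hlam hd hpos.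
have [b [bpos hgeb [Sb [SbC dSb hSb]]]] := shrink hlam hnd hneg.
pose mu S := lam S - a * d S.
pose nu S := lam S - b * (- d S).
pose C1 : {set {set T}} := [set S in C | 0 < mu S].
pose C2 : {set {set T}} := [set S in C | 0 < nu S].
have hC1 : C1 \subset C by apply/subsetP => S; rewrite inE => /andP[].
have hC2 : C2 \subset C by apply/subsetP => S; rewrite inE => /andP[].
have lpos := hlam.1.
have hC12 : C1 :|: C2 = C.
  apply/setP => S; rewrite !inE; case hS: (S \in C) => //=.
  apply/negPn/negP; rewrite negb_or -!leNgt => /andP[h1 h2].
  exact: (arith1 apos bpos (lpos S hS) h1 h2 (hgea S hS) (hgeb S hS)).
have hmusum : forall y, y \in N -> \sum_(S in C | y \in S) mu S = 1.
  by move=> y hy; rewrite /mu sum_lin hd // mulr0 subr0 hlam.2.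
have hnusum : forall y, y \in N -> \sum_(S in C | y \in S) nu S = 1.
  by move=> y hy; rewrite /nu sum_lin hnd // mulr0 subr0 hlam.2.
have SanC1 : Sa \notin C1 by rewrite inE /mu hSa ltxx andbF.
have SbnC2 : Sb \notin C2 by rewrite inE /nu hSb ltxx andbF.
have SaC2 : Sa \in C2.
  by rewrite inE SaC /nu /=; apply: arith2 => //; apply: lpos.
have mb1 : minimal_balanced R N C1.
  apply: indep_minimal; first exact: balanced_support.
  by apply: (indep_sub hC1 K1 SaC SanC1); rewrite lt0r_neq0.
have mb2 : minimal_balanced R N C2.
  apply: indep_minimal; first exact: balanced_support.
  by apply: (indep_sub hC2 K1 SbC SbnC2); move: dSb; rewrite oppr_gt0 => /ltr0_neq0.
have hmuI : \sum_(S in I :&: C1) mu S = 1 - a * dI.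
  rewrite (@sum_subset_pos _ _ C I mu hgea hIC).
  by rewrite sumrB -mulr_sumr hlamI.
have hnuI : \sum_(S in I :&: C2) nu S = 1 + b * dI.
  rewrite (@sum_subset_pos _ _ C I nu hgeb hIC).
  by rewrite sumrB -mulr_sumr sumrN hlamI mulrN opprK.
have habne : a + b != 0 by apply: lt0r_neq0; apply: addr_gt0.
have ht : (1 - (1 - a * dI)) / ((1 + b * dI) - (1 - a * dI)) = a / (a + b).
  field; have -> : 1 + b * dI - (1 - a * dI) = (a + b) * dI by ring.
  by rewrite habne mulf_neq0.
exists C1, C2, mu, nu, I; split => //.
- by apply/eqP => e; move: SaC2; rewrite -e (negbTE SanC1).
- split.
    split; first by move=> S; rewrite inE => /andP[].
    by move=> y hy; rewrite sum_support ?hmusum // => S hS; apply: hgea.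
  split; first by move=> S; rewrite inE => /andP[].
  by move=> y hy; rewrite sum_support ?hnusum // => S hS; apply: hgeb.
- rewrite hC12; split => //.
  by apply: (kern_rank hd); [exists S0 | exact: K1].
- cbv zeta; rewrite hmuI hnuI ht hC12; split => //.
  + apply/eqP => e; have : (a + b) * dI = 0 by move: e; lra.
    by apply/eqP; rewrite mulf_eq0 negb_or habne dI0.
  + by apply: divr_gt0 => //; apply: addr_gt0.
  + by rewrite ltr_pdivrMr ?addr_gt0 // mul1r ltrDl.
Qed.
End Fwd.

Unset Implicit Arguments. Set Strict Implicit. Set Printing Implicit Defensive.

Theorem theorem4p5 (R : realFieldType) (T : finType) (N : {set T}) (p : T)
    (hN : N != set0) (hp : p \notin N) (B : {set {set T}}) :
  minimal_balanced R (p |: N) B <->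
  [\/
   (* (1) *)
   exists (C : {set {set T}}) (lam : {set T} -> R) (I : {set {set T}}),
     [/\ minimal_balanced R N C, balancing N C lam, I \subset C,
         \sum_(S in I) lam S = 1 & B = lift_coll p I C],
   (* (2) *)
   exists (C : {set {set T}}) (lam : {set T} -> R) (I : {set {set T}}),
     [/\ minimal_balanced R N C, balancing N C lam, I \subset C,
         \sum_(S in I) lam S < 1 & B = lift_coll p I C :|: [set [set p]]],
   (* (3) *)
   exists (C : {set {set T}}) (lam : {set T} -> R) (I : {set {set T}})
          (delta : {set T}),
     [/\ minimal_balanced R N C, balancing N C lam, I \subset C /\ delta \in C :\: I,
         \sum_(S in I) lam S < 1 /\ 1 - lam delta < \sum_(S in I) lam S &
         B = lift_coll p I C :|: [set p |: delta]] |
   (* (4) *)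
   exists (C1 C2 : {set {set T}}) (mu nu : {set T} -> R) (I : {set {set T}}),
     [/\ minimal_balanced R N C1 /\ minimal_balanced R N C2, C1 != C2,
         balancing N C1 mu /\ balancing N C2 nu,
         \rank (incidence_mx R N (C1 :|: C2)) = (#|C1 :|: C2|).-1 /\
           I \subset C1 :|: C2 &
         let muI := \sum_(S in I :&: C1) mu S in
         let nuI := \sum_(S in I :&: C2) nu S in
         [/\ muI != nuI, 0 < (1 - muI) / (nuI - muI),
             (1 - muI) / (nuI - muI) < 1 & B = lift_coll p I (C1 :|: C2)]]].
Proof.
split.
  move=> hmb; have := hmb; move/mb_iff => [[hcolB [w hw]] hind].
  case/boolP: ([set p] \in B) => hpB.
    by apply: Or42; apply: (fwd_i hp hcolB hw hind hpB).
  case/boolP: [exists dl : {set T}, [&& dl \in B, p \notin dl & p |: dl \in B]].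
    move=> /existsP[dl /and3P[h1 h2 h3]].
    by apply: Or43; apply: (fwd_ii hp hcolB hw hind hpB h1 h2 h3).
  move=> /existsPn hn.
  have hnp : forall S, S \in B -> p \notin S -> p |: S \notin B.
    by move=> S h1 h2; apply/negP => h3; have := hn S; rewrite h1 h2 h3.
  case: (fwd_iii hp hcolB hw hind hpB hnp) => h; [exact: Or41 | exact: Or44].
case.
- by move=> [C [lam [I [h1 h2 h3 h4 ->]]]]; exact: (back1 hp h1 h2 h3 h4).
- by move=> [C [lam [I [h1 h2 h3 h4 ->]]]]; exact: (back2 hp h1 h2 h3 h4).
- by move=> [C [lam [I [dl [h1 h2 [h3 h4] [h5 h6] ->]]]]]; apply: (back3 hp h1 h2 h3 h4).
- move=> [C1 [C2 [mu [nu [I [[m1 m2] hne [b1 b2] [hr hI] hlet]]]]]].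
  move: hlet; cbv zeta => [[h1 h2 h3 ->]].
  exact: (back4 hp m1 m2 hne b1 b2 hr hI h1 h2 h3).
Qed.
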